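(* Let $r\sim\mathcal N(\mu,\Sigma)$ be a multivariate Gaussian indexed by a finite set, with standard deviations $\sigma_{r_x}=\sqrt{\Sigma_{xx}}\le1$ for all $x$. Let $L_T=(x_t)_{t=1}^T$ be a sequence of evaluation locations with observations $y_t=r_{x_t}+\eta_t$, where the noises $\eta_t\sim\mathcal N(0,\sigma_{x_t}^2)$ are independent (and independent of $r$) with $\sigma_x\le\sigma$ for all $x$. For $t=1,\dots,T$ let $\sigma^2_{r^t_{x_t}}$ denote the posterior variance of $r_{x_t}$ given $y_1,\dots,y_t$. Then $$\gamma_T:=\max_{L_T}I(y_{1:T}(L_T);r)\ \ge\ I(y_{1:T};r)\ \ge\ \frac{\ln(1+\sigma^{-2})}{2}\sum_{t=1}^T\sigma^2_{r^t_{x_t}}.$$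
   Context: $I(\cdot;\cdot)$ denotes mutual information; $y_{1:T}(L_T)$ denotes the observations obtained at locations $L_T$, and the maximum is over all sequences of $T$ locations. The constant $C_\sigma:=2/\ln(1+\sigma^{-2})$ is the reciprocal of the factor in the bound. *)

(* Defs.v *)
From mathcomp Require Import all_boot all_order all_algebra.
From mathcomp Require Import all_classical all_reals all_analysis.
Set Implicit Arguments. Unset Strict Implicit. Unset Printing Implicit Defensive.
Import Order.TTheory GRing.Theory Num.Theory.
Local Open Scope ring_scope.

(* The Gaussian r ~ N(mu, Sigma) is indexed by the finite set 'I_n;
   locations are maps L : 'I_k -> 'I_n; noise std. dev. s : 'I_n -> R. *)

Definition selmx (R : realType) (n k : nat) (L : 'I_k -> 'I_n) : 'M[R]_(k, n) :=
  \matrix_(t < k, j < n) (L t == j)%:R.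

Definition noisemx (R : realType) (n k : nat) (s : 'I_n -> R) (L : 'I_k -> 'I_n)
  : 'M[R]_k := diag_mx (\row_(t < k) (s (L t)) ^+ 2).

(* Mutual information I(y_{1:k}; r) for y = S r + eta, r ~ N(mu,Sigma),
   eta ~ N(0,D) independent of r:  (ln det(S Sigma S^T + D) - ln det D)/2,
   i.e. h(y) - h(y | r) for jointly Gaussian variables (in nats). *)
Definition gaussMI (R : realType) (n k : nat) (Sigma : 'M[R]_n)
  (s : 'I_n -> R) (L : 'I_k -> 'I_n) : R :=
  (ln (\det (selmx R L *m Sigma *m (selmx R L)^T + noisemx s L))
   - ln (\det (noisemx s L))) / 2.

Definition gammaT (R : realType) (n T : nat) (Sigma : 'M[R]_n)
  (s : 'I_n -> R) : R :=
  \big[Num.max/0]_(L : {ffun 'I_T -> 'I_n}) gaussMI Sigma s L.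

Definition postcov (R : realType) (n k : nat) (Sigma : 'M[R]_n)
  (S : 'M[R]_(k, n)) (D : 'M[R]_k) : 'M[R]_n :=
  Sigma - Sigma *m S^T *m invmx (S *m Sigma *m S^T + D) *m S *m Sigma.

Lemma pref_proof (T : nat) (t : 'I_T) (i : 'I_((nat_of_ord t).+1)) : (i < T)%N.
Proof. have Hi : (i <= t)%N := ltnSE (ltn_ord i). exact: leq_ltn_trans Hi (ltn_ord t). Qed.
Definition pref (T : nat) (t : 'I_T) (i : 'I_((nat_of_ord t).+1)) : 'I_T :=
  Ordinal (@pref_proof T t i).

(* sigma^2_{r^t_{x_t}}: posterior variance of r_{x_t} given y_1..y_t
   (t is 0-indexed here, so the prefix has t.+1 observations) *)
Definition postvar (R : realType) (n T : nat) (Sigma : 'M[R]_n)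
  (s : 'I_n -> R) (L : 'I_T -> 'I_n) (t : 'I_T) : R :=
  postcov Sigma (selmx R (fun i => L (@pref T t i)))
                (noisemx s (fun i => L (@pref T t i))) (L t) (L t).

(* Main.v *)
Require Import Defs.
From mathcomp Require Import all_boot all_order all_algebra.
From mathcomp Require Import all_classical all_reals all_analysis.
From mathcomp Require Import ring lra.
Set Implicit Arguments. Unset Strict Implicit. Unset Printing Implicit Defensive.
Import Order.TTheory GRing.Theory Num.Theory.
Local Open Scope ring_scope.

Lemma sylvester (R : comRingType) k n (X : 'M[R]_(k, n)) (Y : 'M[R]_(n, k)) :
  \det (1%:M + X *m Y) = \det (1%:M + Y *m X).
Proof.
pose N := block_mx (1%:M : 'M[R]_k) (- X) Y (1%:M : 'M[R]_n).
pose U := block_mx (1%:M : 'M[R]_k) X 0 (1%:M : 'M[R]_n).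
have dU : \det U = 1 by rewrite det_ublock !det1 mulr1.
have e1 : N *m U = block_mx 1%:M 0 Y (1%:M + Y *m X).
  by rewrite mulmx_block !mulmx1 !mul1mx !mulmx0 !addr0 subrr addrC.
have e2 : U *m N = block_mx (1%:M + X *m Y) 0 Y 1%:M.
  by rewrite mulmx_block !mulmx1 !mul1mx !mul0mx !add0r addNr.
have := congr1 determinant e1; have := congr1 determinant e2.
rewrite !det_mulmx !det_lblock !det1 dU mul1r mulr1 => <-.
by rewrite mulrC.
Qed.

Lemma part1 (R : realType) (n T : nat) (Sigma : 'M[R]_n) (s : 'I_n -> R) (L : 'I_T -> 'I_n) :
  gaussMI Sigma s L <= gammaT T Sigma s.
Proof.
have -> : gaussMI Sigma s L = gaussMI Sigma s (finfun L).
  have eS : selmx R L = selmx R (finfun L).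
    by apply/matrixP => i j; rewrite !mxE ffunE.
  have eD : noisemx s L = noisemx s (finfun L).
    by apply/matrixP => i j; rewrite !mxE !ffunE.
  by rewrite /gaussMI eS eD.
rewrite /gammaT; apply: (@Order.TotalTheory.le_bigmax_seq _ _ _ _ _ (finfun L)) => //.
exact: mem_index_enum.
Qed.
Section Gen.
Variables (R : realType) (n : nat) (Sigma : 'M[R]_n) (s : 'I_n -> R).
Hypothesis spos : forall x, 0 < s x.
Variables (k : nat) (M : 'I_k -> 'I_n).

Let S := selmx R M.
Let D := noisemx s M.
Let Di : 'M[R]_k := diag_mx (\row_(t < k) (s (M t))^-2).
Definition Gof := \sum_(t < k) (s (M t))^-2 *: (delta_mx (M t) (M t) : 'M[R]_n).

Lemma DDi : D *m Di = 1%:M.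
Proof.
apply/matrixP => i j; rewrite mul_diag_mx !mxE.
case: eqP => [->|_]; last by rewrite !mulr0.
rewrite !mulr1n mulrV // unitfE expf_neq0 //; exact: lt0r_neq0 (spos _).
Qed.

Lemma DiD : Di *m D = 1%:M.
Proof.
apply/matrixP => i j; rewrite mul_diag_mx !mxE.
case: eqP => [->|_]; last by rewrite !mulr0.
rewrite !mulr1n mulVr // unitfE expf_neq0 //; exact: lt0r_neq0 (spos _).
Qed.

Lemma detD_gt0 : 0 < \det D.
Proof.
rewrite /D /noisemx det_diag; apply: prodr_gt0 => i _; rewrite mxE.
by apply: exprn_gt0; apply: spos.
Qed.

Lemma Gform : S^T *m Di *m S = Gof.
Proof.
apply/matrixP => i j; rewrite mul_mx_diag /Gof summxE !mxE.
apply: eq_bigr => t _; rewrite !mxE.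
rewrite [i == _]eq_sym [j == _]eq_sym.
by case: (M t == i); case: (M t == j); rewrite /= ?mulr1 ?mul0r ?mulr0 ?mul1r.
Qed.

Lemma detA : \det (S *m Sigma *m S^T + D) = \det D * \det (1%:M + Sigma *m Gof).
Proof.
have -> : S *m Sigma *m S^T + D = D *m (1%:M + (Di *m S) *m (Sigma *m S^T)).
  by rewrite mulmxDr mulmx1 !mulmxA DDi mul1mx addrC.
rewrite det_mulmx sylvester -Gform !mulmxA.
done.
Qed.

Lemma postcovE : (1%:M + Sigma *m Gof) \in unitmx ->
  postcov Sigma S D = invmx (1%:M + Sigma *m Gof) *m Sigma.
Proof.
set B := 1%:M + Sigma *m Gof => uB.
set A := S *m Sigma *m S^T + D.
have uA : A \in unitmx.
  rewrite unitmxE detA unitrM -!unitmxE uB andbT unitmxE unitfE.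
  exact: lt0r_neq0 detD_gt0.
have kB : B *m (Sigma *m S^T) = Sigma *m S^T *m Di *m A.
  rewrite /A /B -Gform !mulmxDr !mulmxDl !mul1mx -!mulmxA DiD mulmx1 addrC.
  done.
have e : B *m (Sigma *m S^T *m invmx A *m S *m Sigma) = Sigma *m S^T *m Di *m S *m Sigma.
  rewrite !mulmxA -(mulmxA B Sigma) kB -(mulmxA _ A (invmx A)) mulmxV // mulmx1.
  done.
have e2 : B *m postcov Sigma S D = Sigma.
  rewrite /postcov -/A mulmxBr e /B mulmxDl mul1mx -Gform !mulmxA addrK.
  done.
exact: (canRL (mulKmx uB) e2).
Qed.
End Gen.
Section Main.
Variables (R : realType) (n T : nat) (Sigma : 'M[R]_n) (s : 'I_n -> R) (L : 'I_T -> 'I_n).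
Hypothesis spos : forall x, 0 < s x.
Hypothesis Ssym : Sigma^T = Sigma.
Hypothesis Spsd : forall v : 'rV[R]_n, 0 <= (v *m Sigma *m v^T) 0 0.

Definition term (t : 'I_T) : 'M[R]_n := (s (L t))^-2 *: delta_mx (L t) (L t).
Definition Gk (m : nat) := \sum_(t < T | (t < m)%N) term t.
Definition Bk m := 1%:M + Sigma *m Gk m.
Definition Ck m := invmx (Bk m) *m Sigma.

Lemma term_quad t (w : 'rV[R]_n) :
  (w *m term t *m w^T) 0 0 = (s (L t))^-2 * (w 0 (L t)) ^+ 2.
Proof.
rewrite /term -(mul_delta_mx (0 : 'I_1)) -scalemxAr -scalemxAl mxE.
rewrite mulmxA -colE -mulmxA -rowE mxE big_ord1 !mxE expr2.
done.
Qed.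

Lemma quadG m (w : 'rV[R]_n) : 0 <= (w *m Gk m *m w^T) 0 0.
Proof.
rewrite /Gk mulmx_sumr mulmx_suml summxE; apply: sumr_ge0 => t _.
rewrite term_quad; apply: mulr_ge0; last exact: sqr_ge0.
by rewrite invr_ge0 exprn_ge0 // ltW.
Qed.

Lemma Ck_psd m (v : 'rV[R]_n) : Bk m \in unitmx -> 0 <= (v *m Ck m *m v^T) 0 0.
Proof.
move=> uB; set q := v *m invmx (Bk m).
have vq : v = q *m Bk m by rewrite /q -mulmxA mulVmx // mulmx1.
have -> : v *m Ck m *m v^T = q *m Sigma *m v^T by rewrite /Ck /q !mulmxA.
rewrite vq trmx_mul /Bk raddfD /= trmx1 trmx_mul Ssym mulmxDl mul1mx mulmxDr mxE.
apply: addr_ge0; first exact: Spsd.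
set w := q *m Sigma.
have -> : w *m ((Gk m)^T *m Sigma *m q^T) = w *m (Gk m)^T *m w^T.
  by rewrite [w^T]trmx_mul Ssym !mulmxA.
have -> : w *m (Gk m)^T *m w^T = (w *m Gk m *m w^T)^T.
  clearbody w. by rewrite !trmx_mul trmxK mulmxA.
rewrite mxE; exact: quadG.
Qed.

Lemma Gk_step (k : 'I_T) : Gk k.+1 = Gk k + term k.
Proof.
rewrite /Gk (bigD1 k) //= addrC; congr (_ + _); apply: eq_bigl => i.
by rewrite ltnS [(i < k)%N]ltn_neqAle andbC.
Qed.

Lemma G_full : Gof s L = Gk T.
Proof. by rewrite /Gof /Gk; apply: eq_bigl => i; rewrite ltn_ord. Qed.

Lemma G_pref (t : 'I_T) : Gof s (fun i => L (@pref T t i)) = Gk t.+1.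
Proof.
rewrite /Gk (big_ord_narrow (ltn_ord t)) /Gof; apply: eq_bigr => i _.
have -> : @pref T t i = widen_ord (ltn_ord t) i by apply: val_inj.
by [].
Qed.

Lemma Gk0 : Gk 0 = 0.
Proof. by rewrite /Gk big_pred0. Qed.

Lemma Ck_diag_ge0 m x : Bk m \in unitmx -> 0 <= Ck m x x.
Proof.
move=> uB; have := Ck_psd (delta_mx 0 x) uB.
by rewrite -rowE trmx_delta -colE !mxE.
Qed.

Lemma step (k : 'I_T) : Bk k \in unitmx ->
  let x := L k in let d := (s x)^-2 in let a := Ck k x x in
  [/\ \det (Bk k.+1) = \det (Bk k) * (1 + d * a),
      Bk k.+1 \in unitmx &
      Ck k.+1 x x * (1 + d * a) = a].
Proof.
move=> uB x d a.
set U := Ck k *m (d *: (delta_mx x 0 : 'M[R]_(n,1))).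
set V := (delta_mx 0 x : 'M[R]_(1,n)).
have BC : Bk k *m Ck k = Sigma by rewrite /Ck mulmxA mulmxV // mul1mx.
have eB : Bk k.+1 = Bk k *m (1%:M + U *m V).
  rewrite mulmxDr mulmx1 /U /Ck !mulmxA mulmxV // mul1mx.
  rewrite /Bk Gk_step mulmxDr addrA; congr (_ + _).
  by rewrite /term -(mul_delta_mx (0:'I_1)) -mulmxA scalemxAl.
have dB : \det (Bk k.+1) = \det (Bk k) * (1 + d * a).
  rewrite eB det_mulmx (sylvester U V) det_mx11 mxE /V -rowE mxE /U -scalemxAr mxE -colE !mxE.
  by rewrite eqxx mulr1n /a /Ck [in RHS]mxE.
have a0 : 0 <= a by apply: Ck_diag_ge0.
have d0 : 0 < d by rewrite /d invr_gt0 exprn_gt0.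
have pos : 0 < 1 + d * a.
  by apply: (lt_le_trans ltr01); rewrite lerDl mulr_ge0 // ltW.
have uB' : Bk k.+1 \in unitmx.
  rewrite unitmxE dB unitrM -unitmxE uB /= unitfE; exact: lt0r_neq0.
split => //.
have BC' : Bk k.+1 *m Ck k.+1 = Sigma by rewrite /Ck mulmxA mulmxV // mul1mx.
have e : (1%:M + U *m V) *m Ck k.+1 = Ck k.
  apply: (can_inj (mulKmx uB)); by rewrite mulmxA -eB BC' BC.
have := congr1 (fun M : 'M[R]_n => M x x) e.
rewrite mulmxDl mul1mx mxE -mulmxA /V -rowE /U -scalemxAr -colE.
move: (Ck k.+1) => C'.
have E : forall C : 'M[R]_n, ((d *: col x C) *m row x C') x x = d * C x x * C' x x.
  by move=> C; rewrite !mxE big_ord1 !mxE.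
rewrite E -/a => h.
by rewrite mulrDr mulr1 -[in RHS]h mulrC [d * a]mulrC.
Qed.

Lemma lnineq (u : R) : 0 <= u -> u / (1 + u) <= ln (1 + u).
Proof.
move=> u0; have p : 0 < 1 + u by apply: (lt_le_trans ltr01); rewrite lerDl.
have h := @le_ln1Dx R ((1 + u)^-1 - 1).
rewrite addrCA subrr addr0 lnV ?posrE // in h.
have : - ((1 + u)^-1 - 1) <= ln (1 + u).
  rewrite lerNl; apply: h. rewrite ltrBrDr addrC subrr invr_gt0 //.
suff -> : - ((1 + u)^-1 - 1) = u / (1 + u) by [].
apply: (mulIf (lt0r_neq0 p)); rewrite mulNr mulrBl mulVf ?(lt0r_neq0 p) //.
rewrite mul1r mulfVK ?(lt0r_neq0 p) //; lra.
Qed.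

Lemma postvarE (t : 'I_T) : Bk t.+1 \in unitmx ->
  postvar Sigma s L t = Ck t.+1 (L t) (L t).
Proof.
move=> u; rewrite /postvar postcovE //; first by rewrite G_pref.
by rewrite G_pref.
Qed.

Lemma induct (c : R) : 0 <= c -> (forall x, c <= (s x)^-2) ->
  forall m, (m <= T)%N -> [/\ Bk m \in unitmx, 0 < \det (Bk m) &
    c * \sum_(t < T | (t < m)%N) postvar Sigma s L t <= ln (\det (Bk m))].
Proof.
move=> c0 cle; elim => [_|m IH lt].
  have -> : Bk 0 = 1%:M by rewrite /Bk Gk0 mulmx0 addr0.
  rewrite unitmx1 det1 ln1 big_pred0 // mulr0; split => //; exact: ltr01.
have [uB dB0 ih] := IH (ltnW lt).
pose k := Ordinal lt.
have [dB uB' pe] := @step k uB.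
rewrite /= in dB uB' pe.
set d := (s (L k))^-2 in dB pe; set a := Ck m (L k) (L k) in dB pe.
have a0 : 0 <= a by apply: Ck_diag_ge0.
have d0 : 0 < d by rewrite /d invr_gt0 exprn_gt0.
have pos : 0 < 1 + d * a.
  by apply: (lt_le_trans ltr01); rewrite lerDl mulr_ge0 // ltW.
split => //; first by rewrite dB mulr_gt0.
rewrite (bigD1 k) //= postvarE //= dB lnM ?posrE ?mulr_gt0 //.
have -> : \sum_(i < T | (i < m.+1)%N && (i != k)) postvar Sigma s L i =
          \sum_(t < T | (t < m)%N) postvar Sigma s L t.
  by apply: eq_bigl => i; rewrite ltnS [(i < m)%N]ltn_neqAle andbC.
rewrite mulrDr addrC lerD //.
set p := Ck m.+1 (L k) (L k) in pe *.
have hp : p = a / (1 + d * a).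
  by apply: (mulIf (lt0r_neq0 pos)); rewrite pe mulfVK // lt0r_neq0.
have p0 : 0 <= p by rewrite hp divr_ge0 // ltW.
apply: (le_trans _ (lnineq (mulr_ge0 (ltW d0) a0))).
apply: (le_trans (ler_wpM2r p0 (cle (L k)))); rewrite -/d.
by rewrite hp -mulrA mulrC.
Qed.
End Main.

Unset Implicit Arguments.
Theorem lemmaD2 (R : realType) (n T : nat) (mu : 'rV[R]_n) (Sigma : 'M[R]_n)
  (s : 'I_n -> R) (sigma : R) (L : 'I_T -> 'I_n) :
  Sigma^T = Sigma ->
  (forall v : 'rV[R]_n, 0 <= (v *m Sigma *m v^T) 0 0) ->
  (forall x : 'I_n, Sigma x x <= 1) ->
  0 < sigma ->
  (forall x : 'I_n, 0 < s x /\ s x <= sigma) ->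
  gaussMI Sigma s L <= gammaT T Sigma s /\
  ln (1 + sigma ^- 2) / 2 * \sum_(t < T) postvar Sigma s L t
    <= gaussMI Sigma s L.
Proof.
move=> Ssym Spsd _ sig0 hs.
split; first exact: part1.
have spos x : 0 < s x := (hs x).1.
set c := ln (1 + sigma ^- 2).
have c0 : 0 <= c by apply: ln_ge0; rewrite lerDl invr_ge0 exprn_ge0 // ltW.
have cle : forall x, c <= s x ^- 2.
  move=> x; apply: (le_trans (le_ln1Dx _)).
    by apply: (lt_le_trans (ltrN10 R)); rewrite invr_ge0 exprn_ge0 // ltW.
  rewrite lef_pV2 ?posrE ?exprn_gt0 //.
  rewrite !expr2; apply: ler_pM; try exact: ltW (spos x); exact: (hs x).2.
have [uB dB0 ih] := induct L spos Ssym Spsd c0 cle (leqnn T).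
rewrite /gaussMI (detA Sigma spos L) G_full lnM ?posrE ?(detD_gt0 spos L) // addrAC subrr add0r.
have -> : \sum_(t < T) postvar Sigma s L t = \sum_(t < T | (t < T)%N) postvar Sigma s L t.
  by apply: eq_bigl => i; rewrite ltn_ord.
by rewrite mulrAC ler_pM2r ?invr_gt0 //.
Qed.
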